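(* Let $G=(V,\mathcal E)$ be an undirected loopless graph and $(V_j)_{j\in J}$ a partition of $V$ into non-empty sets. Then $(V_j)_{j\in J}$ is a monomorphic decomposition of $G$ if and only if each induced subgraph $G_{\restriction V_j}$ is a clique or an independent set and $G$ is the lexicographic sum of the graphs $G_{\restriction V_j}$ indexed by some graph $H$ on $J$. In particular, $G$ has a monomorphic decomposition into finitely many classes if and only if $G$ is a lexicographic sum of cliques or independent sets indexed by a finite graph.
   Context: A monomorphic decomposition of a graph $G$ with vertex set $V$ is a partition $(V_j)_{j\in J}$ of $V$ into non-empty sets such that for all finite $F,F'\subseteq V$ with $|F\cap V_j|=|F'\cap V_j|$ for every $j\in J$, the induced subgraphs $G_{\restriction F}$ and $G_{\restriction F'}$ are isomorphic. If $H$ is a graph on a vertex set $J$ and $(L_j)_{j\in J}$ are graphs, the lexicographic sum of the $L_j$ indexed by $H$ is the graph on the disjoint union of the vertex sets of the $L_j$ in which two vertices of the same $L_j$ are adjacent iff they are adjacent in $L_j$, and $x\in L_i$, $y\in L_j$ with $i\neq j$ are adjacent iff $\{i,j\}$ is an edge of $H$. *)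

(* Defs.v *)
From Stdlib Require Import List.
Import ListNotations.
Set Implicit Arguments.

Definition is_graph (V : Type) (E : V -> V -> Prop) : Prop :=
  (forall x y, E x y -> E y x) /\ (forall x, ~ E x x).

Definition finite_subset (V : Type) (P : V -> Prop) : Prop :=
  exists l : list V, forall x, P x -> In x l.

Definition has_card (V : Type) (P : V -> Prop) (n : nat) : Prop :=
  exists l : list V, NoDup l /\ length l = n /\ (forall x, P x <-> In x l).

Definition induced_isomorphic (V : Type) (E : V -> V -> Prop)
  (F F' : V -> Prop) : Prop :=
  exists f : V -> V,
    (forall x, F x -> F' (f x)) /\
    (forall x y, F x -> F y -> f x = f y -> x = y) /\
    (forall y, F' y -> exists x, F x /\ f x = y) /\
    (forall x y, F x -> F y -> (E x y <-> E (f x) (f y))).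

(* A partition (V_j)_{j in J} of V into non-empty sets is encoded by the
   class map cls : V -> J (V_j = cls^{-1}(j)); non-emptiness = surjectivity. *)
Definition nonempty_classes (V J : Type) (cls : V -> J) : Prop :=
  forall j, exists v, cls v = j.

Definition monomorphic_decomposition (V J : Type) (E : V -> V -> Prop)
  (cls : V -> J) : Prop :=
  forall F F' : V -> Prop,
    finite_subset F -> finite_subset F' ->
    (forall (j : J) (n : nat),
        has_card (fun x => F x /\ cls x = j) n <->
        has_card (fun x => F' x /\ cls x = j) n) ->
    induced_isomorphic E F F'.

Definition clique_or_independent (V J : Type) (E : V -> V -> Prop)
  (cls : V -> J) (j : J) : Prop :=
  (forall x y, cls x = j -> cls y = j -> x <> y -> E x y) \/
  (forall x y, cls x = j -> cls y = j -> ~ E x y).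

(* E is the lexicographic sum of the induced subgraphs E|V_j indexed by
   the graph H on J (edges inside a class are those of E by definition). *)
Definition lexicographic_sum_of (V J : Type) (E : V -> V -> Prop)
  (cls : V -> J) (H : J -> J -> Prop) : Prop :=
  is_graph H /\
  (forall x y, cls x <> cls y -> (E x y <-> H (cls x) (cls y))).

Definition finite_type (J : Type) : Prop :=
  exists l : list J, forall j, In j l.

(* Main.v *)
Require Import Defs.
From Stdlib Require Import List ClassicalEpsilon Classical Lia.
Import ListNotations.
Set Implicit Arguments.
Unset Strict Implicit.

Lemma hc_ext (V : Type) (P Q : V -> Prop) n :
  (forall x, P x <-> Q x) -> has_card P n -> has_card Q n.
Proof.
  intros HPQ [l [Hn [Hl Hm]]]. exists l; repeat split; auto.
  - intro H. apply Hm, HPQ, H.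
  - intro H. apply HPQ, Hm, H.
Qed.

Lemma hc_unique (V : Type) (P : V -> Prop) n m :
  has_card P n -> has_card P m -> n = m.
Proof.
  intros [l1 [N1 [L1 M1]]] [l2 [N2 [L2 M2]]]. subst.
  assert (length l1 <= length l2).
  { apply NoDup_incl_length; auto. intros x Hx. apply M2, M1, Hx. }
  assert (length l2 <= length l1).
  { apply NoDup_incl_length; auto. intros x Hx. apply M1, M2, Hx. }
  lia.
Qed.

Lemma hc_exists (V : Type) (l : list V) : forall (P : V -> Prop),
  (forall x, P x -> In x l) -> exists n, has_card P n.
Proof.
  induction l as [|a l IH]; intros P HP.
  - exists 0, []. split; [constructor|split; [reflexivity|]].
    intros x; split; [intro H; apply (HP x H)|intros []].
  - destruct (IH (fun x => P x /\ x <> a)) as [n [l' [N [L M]]]].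
    { intros x [Px Hx]. destruct (HP x Px); auto. congruence. }
    destruct (classic (P a)) as [Pa|nPa].
    + exists (S n), (a :: l'). repeat split.
      * constructor; auto. intro H. apply M in H. tauto.
      * simpl; auto.
      * intro Px. destruct (classic (x = a)). left; auto. right; apply M; auto.
      * intros [<-|H]; auto. apply M in H; tauto.
    + exists n, l'. repeat split; auto.
      * intro Px. apply M. split; auto. intro; subst; tauto.
      * intro H. apply M in H; tauto.
Qed.

Lemma hc_remove (V : Type) (P : V -> Prop) n a :
  has_card P (S n) -> P a -> has_card (fun x => P x /\ x <> a) n.
Proof.
  intros [l [N [L M]]] Pa.
  assert (Ia : In a l) by (apply M; auto).
  destruct (in_split _ _ Ia) as [l1 [l2 ->]].
  exists (l1 ++ l2). split; [|split; [|intro x; split]].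
  - eapply NoDup_remove_1; eauto.
  - rewrite length_app in *. simpl in L. lia.
  - intros [Px Hx]. apply M in Px. apply in_app_or in Px. apply in_or_app.
    destruct Px as [H|[H|H]]; auto. congruence.
  - intro H. split.
    + apply M. apply in_app_or in H. apply in_or_app.
      destruct H; simpl; auto.
    + intro; subst. eapply NoDup_remove_2; eauto.
Qed.

Lemma hc_add (V : Type) (P : V -> Prop) n a :
  has_card (fun x => P x /\ x <> a) n -> P a -> has_card P (S n).
Proof.
  intros [l [N [L M]]] Pa. exists (a :: l). repeat split.
  - constructor; auto. intro H. apply M in H. tauto.
  - simpl; auto.
  - intro Px. destruct (classic (x = a)). left; auto. right; apply M; auto.
  - intros [<-|H]; auto. apply M in H; tauto.
Qed.

Lemma hc_pos (V : Type) (P : V -> Prop) n a :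
  has_card P n -> P a -> exists m, n = S m.
Proof.
  intros [l [N [L M]]] Pa. apply M in Pa. destruct l; [destruct Pa|].
  simpl in L. eauto.
Qed.

Lemma hc_transfer (V W : Type) (P : V -> Prop) (Q : W -> Prop) (g : V -> W) n :
  has_card P n -> (forall x, P x -> Q (g x)) ->
  (forall x y, P x -> P y -> g x = g y -> x = y) ->
  (forall y, Q y -> exists x, P x /\ g x = y) -> has_card Q n.
Proof.
  intros [l [N [L M]]] HPQ Hinj Hsurj. exists (map g l). repeat split.
  - apply NoDup_map_NoDup_ForallPairs; auto.
    intros a b Ha Hb. apply Hinj; apply M; auto.
  - rewrite length_map; auto.
  - intro Qx. destruct (Hsurj _ Qx) as [z [Pz <-]]. apply in_map, M, Pz.
  - intro H. apply in_map_iff in H. destruct H as [z [<- Hz]]. apply HPQ, M, Hz.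
Qed.

Lemma hc_ext_iff (V : Type) (P Q : V -> Prop) n :
  (forall x, P x <-> Q x) -> (has_card P n <-> has_card Q n).
Proof.
  intros H; split; apply hc_ext; firstorder.
Qed.

Lemma hc_elem (V : Type) (P : V -> Prop) m :
  has_card P (S m) -> exists a, P a.
Proof.
  intros [l [N [L M]]]. destruct l as [|a l]; [discriminate|]. exists a. apply M. left; auto.
Qed.

Lemma hc_minus_iff (V : Type) (P : V -> Prop) a m :
  P a -> (has_card (fun x => P x /\ x <> a) m <-> has_card P (S m)).
Proof.
  intros Pa; split; intro H. eapply hc_add; eauto. apply hc_remove; auto.
Qed.

Lemma fin_sub (V : Type) (P Q : V -> Prop) :
  finite_subset P -> (forall x, Q x -> P x) -> finite_subset Q.
Proof. intros [l Hl] H. exists l. auto. Qed.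

Lemma hc_fin (V : Type) (P : V -> Prop) n : has_card P n -> finite_subset P.
Proof. intros [l [_ [_ M]]]. exists l. intros x Hx; apply M; auto. Qed.

Lemma bij (V J : Type) (cls : V -> J) n : forall (F F' : V -> Prop),
  has_card F n -> finite_subset F' ->
  (forall j m, has_card (fun x => F x /\ cls x = j) m <->
               has_card (fun x => F' x /\ cls x = j) m) ->
  exists f : V -> V, (forall x, F x -> F' (f x) /\ cls (f x) = cls x) /\
   (forall x y, F x -> F y -> f x = f y -> x = y) /\
   (forall y, F' y -> exists x, F x /\ f x = y).
Proof.
  induction n as [|n IH]; intros F F' HF HF' Hc.
  - exists (fun x => x).
    assert (E0 : forall x, F x -> False).
    { intros x Fx. destruct (hc_pos HF Fx); discriminate. }
    split; [|split].
    + intros x Fx; exfalso; eauto.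
    + intros x y Fx; exfalso; eauto.
    + intros y Fy. exfalso.
      destruct HF' as [l Hl].
      destruct (@hc_exists V l (fun x => F' x /\ cls x = cls y)) as [m Hm].
      { intros x [Hx _]; auto. }
      destruct (hc_pos Hm (conj Fy eq_refl)) as [m' ->].
      apply Hc in Hm. destruct (hc_elem Hm) as [z [Fz _]]. eauto.
  - destruct (hc_elem HF) as [a Fa].
    set (j := cls a).
    destruct (hc_fin HF) as [lF HlF].
    destruct (@hc_exists V lF (fun x => F x /\ cls x = j)) as [m Hm].
    { intros x [Fx _]; auto. }
    destruct (hc_pos Hm (conj Fa eq_refl)) as [m0 ->].
    pose proof Hm as Hm'. apply Hc in Hm'.
    destruct (hc_elem Hm') as [b [Fb Cb]].
    destruct (IH (fun x => F x /\ x <> a) (fun x => F' x /\ x <> b)) as [f0 [Hf1 [Hf2 Hf3]]].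
    + apply hc_remove; auto.
    + eapply fin_sub; eauto. intros x [Hx _]; auto.
    + intros i k. destruct (classic (i = j)) as [->|Hij].
      * rewrite (@hc_ext_iff V _ (fun x => (F x /\ cls x = j) /\ x <> a)) by (intros; tauto).
        rewrite (@hc_ext_iff V (fun x => (F' x /\ x <> b) /\ cls x = j)
                    (fun x => (F' x /\ cls x = j) /\ x <> b)) by (intros; tauto).
        rewrite hc_minus_iff by (split; auto).
        rewrite hc_minus_iff by (split; auto).
        apply Hc.
      * rewrite (@hc_ext_iff V _ (fun x => F x /\ cls x = i)).
        rewrite (@hc_ext_iff V (fun x => (F' x /\ x <> b) /\ cls x = i)
                    (fun x => F' x /\ cls x = i)).
        apply Hc.
        -- intros x; split; [tauto|]. intros [Fx Cx]; repeat split; auto.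
           intros ->. apply Hij. rewrite <- Cx, Cb. reflexivity.
        -- intros x; split; [tauto|]. intros [Fx Cx]; repeat split; auto.
           intros ->. apply Hij. rewrite <- Cx. reflexivity.
    + exists (fun x => if excluded_middle_informative (x = a) then b else f0 x).
      split; [|split].
      * intros x Fx. destruct (excluded_middle_informative (x = a)) as [->|Hxa].
        -- split; auto.
        -- destruct (Hf1 x (conj Fx Hxa)) as [[H1 _] H2]; auto.
      * intros x y Fx Fy E.
        destruct (excluded_middle_informative (x = a)) as [Hxa|Hxa];
        destruct (excluded_middle_informative (y = a)) as [Hya|Hya]; try congruence.
        -- destruct (Hf1 y (conj Fy Hya)) as [[_ H] _]. congruence.
        -- destruct (Hf1 x (conj Fx Hxa)) as [[_ H] _]. congruence.
        -- apply Hf2; auto.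
      * intros y Fy. destruct (classic (y = b)) as [->|Hyb].
        -- exists a. split; auto. destruct (excluded_middle_informative (a = a)); congruence.
        -- destruct (Hf3 y (conj Fy Hyb)) as [x [[Fx Hxa] <-]]. exists x. split; auto.
           destruct (excluded_middle_informative (x = a)); congruence.
Qed.

Lemma pair_transfer (V J : Type) (cls : V -> J) (x y u v : V) j m :
  x <> y -> u <> v -> cls x = cls u -> cls y = cls v ->
  has_card (fun z => (z = x \/ z = y) /\ cls z = j) m ->
  has_card (fun z => (z = u \/ z = v) /\ cls z = j) m.
Proof.
  intros Hxy Huv Cu Cv H.
  apply (hc_transfer (g := fun z => if excluded_middle_informative (z = x) then u else v) H).
  - intros z [[->| ->] Cz]; destruct (excluded_middle_informative _); try congruence;
      split; auto; congruence.
  - intros z w [[->| ->] _] [[->| ->] _]; repeat destruct (excluded_middle_informative _);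
      congruence.
  - intros w [[->| ->] Cw].
    + exists x. destruct (excluded_middle_informative (x = x)); [|congruence].
      split; auto. split; auto. congruence.
    + exists y. destruct (excluded_middle_informative (y = x)); [congruence|].
      split; auto. split; auto. congruence.
Qed.

Lemma pair_iso (V J : Type) (E : V -> V -> Prop) (cls : V -> J) (x y u v : V) :
  is_graph E -> monomorphic_decomposition E cls ->
  x <> y -> u <> v -> cls x = cls u -> cls y = cls v -> (E x y <-> E u v).
Proof.
  intros [Hs Hi] M Hxy Huv Cu Cv.
  destruct (M (fun z => z = x \/ z = y) (fun z => z = u \/ z = v)) as [f [H1 [H2 [H3 H4]]]].
  - exists [x; y]. intros z [->| ->]; simpl; auto.
  - exists [u; v]. intros z [->| ->]; simpl; auto.
  - intros j m; split; apply pair_transfer; auto.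
  - assert (Fx : x = x \/ x = y) by auto. assert (Fy : y = x \/ y = y) by auto.
    rewrite (H4 x y Fx Fy).
    assert (Hne : f x <> f y) by (intro Heq; apply Hxy; apply H2; auto).
    destruct (H1 x Fx) as [Ex|Ex]; destruct (H1 y Fy) as [Ey|Ey];
      rewrite Ex, Ey in *; try congruence; try tauto.
    split; apply Hs.
Qed.

Lemma part1 (V J : Type) (E : V -> V -> Prop) (cls : V -> J) :
  is_graph E ->
  (monomorphic_decomposition E cls <->
   ((forall j, clique_or_independent E cls j) /\
    exists H : J -> J -> Prop, lexicographic_sum_of E cls H)).
Proof.
  intros HE. pose proof HE as [Hs Hi]. split.
  - intro M. split.
    + intro j. destruct (classic (forall x y, cls x = j -> cls y = j -> x <> y -> E x y)) as [C|C];
        [left; auto|right].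
      intros x y Cx Cy Exy. apply C. intros x' y' Cx' Cy' Hne.
      apply (pair_iso (x := x) (y := y) HE M); auto; try congruence.
      intro; subst; apply (Hi y); auto.
    + exists (fun i k => i <> k /\ exists x y, cls x = i /\ cls y = k /\ E x y).
      split; [split|].
      * intros i k [Hne [x [y [Cx [Cy Exy]]]]]. split; [congruence|]. exists y, x; auto.
      * intros i [H _]; apply H; auto.
      * intros x y Hne; split.
        -- intro Exy. split; auto. exists x, y; auto.
        -- intros [_ [x' [y' [Cx [Cy Exy]]]]].
           apply (pair_iso (x := x') (y := y') HE M); auto.
           ++ intro; subst; apply (Hi y'); auto.
           ++ intro; subst; apply Hne; auto.
  - intros [Hcl [H [[HHs HHi] Hlex]]] F F' HF HF' Hc.
    destruct HF as [l Hl]. destruct (hc_exists Hl) as [n Hn].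
    destruct (bij Hn HF' Hc) as [f [Hf1 [Hf2 Hf3]]].
    exists f. split; [|split; [|split]].
    + intros x Fx; apply Hf1; auto.
    + auto.
    + auto.
    + intros x y Fx Fy. destruct (Hf1 x Fx) as [_ Cfx]. destruct (Hf1 y Fy) as [_ Cfy].
      destruct (classic (cls x = cls y)) as [Ceq|Cne].
      * destruct (classic (x = y)) as [->|Hxy].
        -- split; intro Hc'; exfalso; eapply Hi; eauto.
        -- assert (f x <> f y) by (intro Heq; apply Hxy; apply Hf2; auto).
           destruct (Hcl (cls x)) as [C|I].
           ++ split; intro; apply C; auto; congruence.
           ++ split; intro Hc'; exfalso; [eapply (I x y)|eapply (I (f x) (f y))]; eauto;
                congruence.
      * rewrite (Hlex x y Cne). rewrite (Hlex (f x) (f y)) by congruence.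
        rewrite Cfx, Cfy. tauto.
Qed.

Theorem mainTheorem20 :
  (forall (V J : Type) (E : V -> V -> Prop) (cls : V -> J),
     is_graph E -> nonempty_classes cls ->
     (monomorphic_decomposition E cls <->
      ((forall j, clique_or_independent E cls j) /\
       exists H : J -> J -> Prop, lexicographic_sum_of E cls H)))
  /\
  (forall (V : Type) (E : V -> V -> Prop),
     is_graph E ->
     ((exists (J : Type) (cls : V -> J),
         finite_type J /\ nonempty_classes cls /\
         monomorphic_decomposition E cls) <->
      (exists (J : Type) (cls : V -> J) (H : J -> J -> Prop),
         finite_type J /\ nonempty_classes cls /\
         (forall j, clique_or_independent E cls j) /\
         lexicographic_sum_of E cls H))).
Proof.
  split.
  - intros V J E cls HE _. apply part1; auto.
  - intros V E HE. split.
    + intros [J [cls [Hf [Hn M]]]].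
      apply (part1 cls HE) in M. destruct M as [Hcl [H Hl]].
      exists J, cls, H. auto.
    + intros [J [cls [H [Hf [Hn [Hcl Hl]]]]]].
      exists J, cls. split; auto. split; auto. apply (part1 cls HE). eauto.
Qed.
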